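(* Let $\bm\mu=(\mu_1,\dots,\mu_r)$ be finite positive Borel measures on the unit circle with infinite supports and $\bm n,\bm m\in\mathbb N^r$. Then $(\bm n,\bm m)$ is normal if and only if $(\bm m,\bm n)$ is normal, and in that case $\Phi_{\bm n,\bm m}^\sharp=\Phi^*_{\bm m,\bm n}$, where $\Phi^\sharp(z)=\overline{\Phi(1/\bar z)}$.
   Context: $|\bm n|=\sum_j n_j$. The pair $(\bm n,\bm m)$ is normal if there is a unique Laurent polynomial $\Phi_{\bm n,\bm m}\in\operatorname{span}\{z^p:-|\bm m|\le p\le|\bm n|\}$ with coefficient of $z^{|\bm n|}$ equal to $1$ such that $\int\Phi_{\bm n,\bm m}(w)w^{-p}\,d\mu_j(w)=0$ for $p=-m_j,\dots,n_j-1$, $j=1,\dots,r$. When $(\bm n,\bm m)$ is normal, $\Phi^*_{\bm n,\bm m}$ denotes the unique Laurent polynomial in $\operatorname{span}\{z^p:-|\bm m|\le p\le|\bm n|\}$ with coefficient of $z^{-|\bm m|}$ equal to $1$ such that $\int\Phi^*_{\bm n,\bm m}(w)w^{-p}\,d\mu_j(w)=0$ for $p=-m_j+1,\dots,n_j$, $j=1,\dots,r$ (its existence and uniqueness is equivalent to normality of $(\bm n,\bm m)$). *)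

(* Defs.v *)
From HB Require Import structures.
From mathcomp Require Import all_boot all_order all_algebra.
From mathcomp Require Import all_classical all_reals all_analysis.
From mathcomp Require Import complex.
Set Implicit Arguments. Unset Strict Implicit. Unset Printing Implicit Defensive.
Import Order.TTheory GRing.Theory Num.Theory.
Import numFieldNormedType.Exports.
Local Open Scope classical_set_scope.
Local Open Scope ring_scope.

Section Defs.
Variable R : realType.
Local Notation C := (complex R).

Definition unit_circle : set (R * R)%type := [set w | w.1 ^+ 2 + w.2 ^+ 2 = 1].

Definition toC (w : R * R) : C := (w.1 +i* w.2)%C.

(* Borel measures on the plane; "a measure on the unit circle" is a measure
   on the plane concentrated on the unit circle. *)
Definition on_unit_circle (mu : {finite_measure set (R * R)%type -> \bar R}) :=
  mu (~` unit_circle) = 0%E.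

Definition msupport (mu : {finite_measure set (R * R)%type -> \bar R}) : set (R * R)%type :=
  [set x | forall U : set (R * R)%type, open U -> U x -> (0 < mu U)%E].

Definition cint_eq0 (mu : {finite_measure set (R * R)%type -> \bar R}) (f : R * R -> C) :=
  (\int[mu]_(w in unit_circle) (complex.Re (f w))%:E = 0)%E /\
  (\int[mu]_(w in unit_circle) (complex.Im (f w))%:E = 0)%E.

(* Laurent polynomials are represented by their coefficient function
   c : int -> C; c p is the coefficient of z^p.
   in_span a b c : c lies in span{z^p : -a <= p <= b}. *)
Definition in_span (a b : nat) (c : int -> C) :=
  forall p : int, (p < - (a%:Z) \/ b%:Z < p) -> c p = 0.

Definition leval (a b : nat) (c : int -> C) (z : C) : C :=
  \sum_(k < (a + b).+1) c (k%:Z - a%:Z) * z ^ (k%:Z - a%:Z).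

(* Phi^sharp(z) = conj(Phi(1/conj z)): coefficient of z^p is conj(c(-p)). *)
Definition lsharp (c : int -> C) : int -> C := fun p => (c (- p))^*%C.

Definition msize (r : nat) (n : 'I_r -> nat) : nat := (\sum_(j < r) n j)%N.

Definition is_Phi (r : nat) (mu : 'I_r -> {finite_measure set (R * R)%type -> \bar R})
    (n m : 'I_r -> nat) (c : int -> C) :=
  [/\ in_span (msize m) (msize n) c,
      c (msize n)%:Z = 1 &
      forall (j : 'I_r) (p : int), - (m j)%:Z <= p <= (n j)%:Z - 1 ->
        cint_eq0 (mu j) (fun w => leval (msize m) (msize n) c (toC w) * toC w ^ (- p))].

Definition normal (r : nat) (mu : 'I_r -> {finite_measure set (R * R)%type -> \bar R})
    (n m : 'I_r -> nat) :=
  exists! c : int -> C, is_Phi mu n m c.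

Definition is_Phistar (r : nat) (mu : 'I_r -> {finite_measure set (R * R)%type -> \bar R})
    (n m : 'I_r -> nat) (c : int -> C) :=
  [/\ in_span (msize m) (msize n) c,
      c (- (msize m)%:Z) = 1 &
      forall (j : 'I_r) (p : int), - (m j)%:Z + 1 <= p <= (n j)%:Z ->
        cint_eq0 (mu j) (fun w => leval (msize m) (msize n) c (toC w) * toC w ^ (- p))].

End Defs.

(* Main.v *)
Require Import Defs.
From HB Require Import structures.
From mathcomp Require Import all_boot all_order all_algebra.
From mathcomp Require Import all_classical all_reals all_analysis.
From mathcomp Require Import complex.
From mathcomp Require Import ring lra zify measurable_realfun.
Import Order.TTheory GRing.Theory Num.Theory.
Import numFieldNormedType.Exports.
Local Open Scope classical_set_scope.
Local Open Scope ring_scope.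

Section Analysis.
Variable R : realType.
Local Notation C := (complex R).
Local Notation D := (@unit_circle R).
Local Notation Re := complex.Re.
Local Notation Im := complex.Im.

Lemma ReD (x y : C) : Re (x + y) = Re x + Re y. Proof. by case: x; case: y. Qed.
Lemma ImD (x y : C) : Im (x + y) = Im x + Im y. Proof. by case: x; case: y. Qed.
Lemma ReM (x y : C) : Re (x * y) = Re x * Re y - Im x * Im y. Proof. by case: x; case: y. Qed.
Lemma ImM (x y : C) : Im (x * y) = Re x * Im y + Im x * Re y. Proof. by case: x => a b; case: y => c d /=. Qed.
Lemma ReJ (x : C) : Re (x^*)%C = Re x. Proof. by case: x. Qed.
Lemma ImJ (x : C) : Im (x^*)%C = - Im x. Proof. by case: x. Qed.
Lemma Re0 : Re (0 : C) = 0. Proof. by []. Qed.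
Lemma Im0 : Im (0 : C) = 0. Proof. by []. Qed.

Lemma measurable_D : measurable D.
Proof.
have mf : measurable_fun setT (fun w : R * R => w.1 ^+ 2 + w.2 ^+ 2).
  by apply: measurable_funD; apply: measurable_funX; [exact: measurable_fst | exact: measurable_snd].
have := mf measurableT _ (measurable_set1 (1:R)); rewrite setTI.
congr measurable; by apply/seteqP; split.
Qed.

Lemma toC_unit w : D w -> toC w * (toC w)^*%C = 1.
Proof.
case: w => a b /= h; rewrite /toC /=; apply/eqP; rewrite eq_complex /=.
apply/andP; split; apply/eqP; rewrite /unit_circle /= in h; lra.
Qed.

Lemma uni_neq0 {z : C} : z * z^*%C = 1 -> z != 0.
Proof. by move=> h; apply/eqP => z0; move: h; rewrite z0 mul0r => /eqP; rewrite eq_sym oner_eq0. Qed.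

Lemma uni_inv {z : C} : z * z^*%C = 1 -> z^-1 = z^*%C.
Proof.
move=> h; have nz := uni_neq0 h.
by rewrite -[RHS]mul1r -(mulVf nz) -mulrA h mulr1.
Qed.

Lemma powU w k : D w -> toC w ^ k * (toC w ^ k)^*%C = 1.
Proof. by move=> Dw; rewrite (fmorphXz conjc) -expfzMl toC_unit // exp1rz. Qed.

Lemma conj_pow w k : D w -> toC w ^ (- k) = (toC w ^ k)^*%C.
Proof. by move=> Dw; rewrite -invr_expz uni_inv // powU. Qed.

Lemma uni_bound {z : C} : z * z^*%C = 1 -> `|Re z| <= 1 /\ `|Im z| <= 1.
Proof.
case: z => a b /eqP; rewrite eq_complex /= => /andP[/eqP h _].
split; rewrite ler_norml; apply/andP; split; nra.
Qed.

Lemma meas_pown n : measurable_fun setT (fun w : R * R => Re (toC w ^+ n)) /\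
                    measurable_fun setT (fun w : R * R => Im (toC w ^+ n)).
Proof.
elim: n => [|n [IHr IHi]].
  split.
    by have -> : (fun w : R * R => Re (toC w ^+ 0)) = cst 1 by apply/funext => w; rewrite expr0.
  by have -> : (fun w : R * R => Im (toC w ^+ 0)) = cst 0 by apply/funext => w; rewrite expr0.
split.
  have -> : (fun w : R * R => Re (toC w ^+ n.+1)) =
     (fun w => w.1 * Re (toC w ^+ n) - w.2 * Im (toC w ^+ n)).
    by apply/funext => w; rewrite exprS ReM.
  by apply: measurable_funB; apply: measurable_funM; first [exact: measurable_fst | exact: measurable_snd | assumption].
have -> : (fun w : R * R => Im (toC w ^+ n.+1)) =
   (fun w => w.1 * Im (toC w ^+ n) + w.2 * Re (toC w ^+ n)).
  by apply/funext => w; rewrite exprS ImM.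
by apply: measurable_funD; apply: measurable_funM; first [exact: measurable_fst | exact: measurable_snd | assumption].
Qed.

Lemma meas_pow k : measurable_fun D (fun w : R * R => Re (toC w ^ k)) /\
                   measurable_fun D (fun w : R * R => Im (toC w ^ k)).
Proof.
case: k => [n|n].
  by have [h1 h2] := meas_pown n; split; apply: measurable_funS h1 || apply: measurable_funS h2.
have [h1 h2] := meas_pown n.+1.
split.
  apply: (eq_measurable_fun (fun w : R * R => Re (toC w ^+ n.+1))).
    by move=> w /set_mem Dw; rewrite NegzE conj_pow // ReJ.
  exact: measurable_funS h1.
apply: (eq_measurable_fun (fun w : R * R => - Im (toC w ^+ n.+1))).
  by move=> w /set_mem Dw; rewrite NegzE conj_pow // ImJ.
by apply: measurableT_comp => //; exact: measurable_funS h2.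
Qed.


Section Cint.
Variable mu : {finite_measure set (R * R)%type -> \bar R}.
Local Notation mD := measurable_D.
#[local] Hint Resolve measurable_D : core.

Definition rint (g : R * R -> R) := mu.-integrable D (EFin \o g).

Lemma eq_rint {g h} : {in D, g =1 h} -> rint g -> rint h.
Proof. by move=> gh; apply: (eq_integrable mD) => w Dw /=; rewrite gh. Qed.

Lemma rintD {g h} : rint g -> rint h -> rint (fun w => g w + h w).
Proof.
move=> ig ih; apply: (eq_integrable mD _ _ _ (integrableD mD ig ih)).
by move=> w _ /=; rewrite EFinD.
Qed.

Lemma rintZ (k : R) {g} : rint g -> rint (fun w => k * g w).
Proof.
move=> ig; apply: (eq_integrable mD _ _ _ (integrableZl mD k ig)).
by move=> w _ /=; rewrite EFinM.
Qed.

Lemma rintN {g} : rint g -> rint (fun w => - g w).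
Proof. move=> ig; refine (eq_rint _ (rintZ (-1) ig)); move=> w _; by rewrite mulN1r. Qed.

Lemma rint_cst (k : R) : rint (fun _ => k).
Proof. exact: (finite_measure_integrable_cst mu k mD). Qed.

Definition cintegrable (f : R * R -> C) :=
  rint (fun w => Re (f w)) /\ rint (fun w => Im (f w)).

Definition cint (f : R * R -> C) : C :=
  (Rintegral mu D (fun w => Re (f w)) +i* Rintegral mu D (fun w => Im (f w)))%C.

Lemma eq_cintegrable {f g} : {in D, f =1 g} -> cintegrable f -> cintegrable g.
Proof. by move=> fg [h1 h2]; split; [apply: eq_rint h1|apply: eq_rint h2] => w Dw; rewrite fg. Qed.

Lemma cintegrableD {f g} : cintegrable f -> cintegrable g -> cintegrable (fun w => f w + g w).
Proof.
move=> [f1 f2] [g1 g2]; split.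
  by apply: eq_rint (rintD f1 g1) => w _; rewrite ReD.
by apply: eq_rint (rintD f2 g2) => w _; rewrite ImD.
Qed.

Lemma cintegrableZ (c : C) {f} : cintegrable f -> cintegrable (fun w => c * f w).
Proof.
move=> [f1 f2]; split.
  apply: eq_rint (rintD (rintZ (Re c) f1) (rintN (rintZ (Im c) f2))) => w _.
  by rewrite ReM.
apply: eq_rint (rintD (rintZ (Re c) f2) (rintZ (Im c) f1)) => w _.
by rewrite ImM.
Qed.

Lemma cintegrable0 : cintegrable (fun _ => 0).
Proof. by split; apply: rint_cst. Qed.

Lemma cintegrable_sum (I : Type) (s : seq I) (F : I -> R * R -> C) :
  (forall i, cintegrable (F i)) -> cintegrable (fun w => \sum_(i <- s) F i w).
Proof.
move=> hF; elim: s => [|i s IH].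
  by apply: eq_cintegrable cintegrable0 => w _; rewrite big_nil.
by apply: eq_cintegrable (cintegrableD (hF i) IH) => w _; rewrite big_cons.
Qed.

Lemma cintegrable_pow k : cintegrable (fun w => toC w ^ k).
Proof.
have [m1 m2] := meas_pow k.
split; apply: (le_integrable mD _ _ (rint_cst 1)).
- by apply/measurable_EFinP.
- move=> w Dw /=; rewrite lee_fin normr1. exact: (uni_bound (powU w k Dw)).1.
- by apply/measurable_EFinP.
- move=> w Dw /=; rewrite lee_fin normr1; exact: (uni_bound (powU w k Dw)).2.
Qed.

Lemma cint_eq0P {f} : cintegrable f -> cint_eq0 mu f <-> cint f = 0.
Proof.
move=> [h1 h2]; rewrite /cint_eq0 /cint /Rintegral.
have e1 := integrable_fin_num mD h1; have e2 := integrable_fin_num mD h2.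
split.
  by move=> [-> ->].
move=> /eqP; rewrite eq_complex /= => /andP[/eqP E1 /eqP E2]; split.
  by rewrite -(fineK e1) E1.
by rewrite -(fineK e2) E2.
Qed.

Lemma eq_cint f g : {in D, f =1 g} -> cint f = cint g.
Proof.
move=> fg; rewrite /cint; congr (_ +i* _)%C; apply: eq_Rintegral => w Dw; by rewrite fg.
Qed.

Lemma cintD {f g} : cintegrable f -> cintegrable g -> cint (fun w => f w + g w) = cint f + cint g.
Proof.
move=> [f1 f2] [g1 g2]; rewrite /cint.
rewrite (eq_Rintegral mu (g := fun w => Re (f w) + Re (g w))); last by move=> w _; rewrite ReD.
rewrite (eq_Rintegral mu (g := fun w => Im (f w) + Im (g w)) (f := fun w => Im (f w + g w))); last by move=> w _; rewrite ImD.
by rewrite !RintegralD.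
Qed.

Lemma cintZ (c : C) {f} : cintegrable f -> cint (fun w => c * f w) = c * cint f.
Proof.
move=> [f1 f2]; rewrite /cint.
rewrite (eq_Rintegral mu (g := fun w => Re c * Re (f w) + - (Im c * Im (f w)))); last by move=> w _; rewrite ReM.
rewrite (eq_Rintegral mu (g := fun w => Re c * Im (f w) + Im c * Re (f w)) (f := fun w => Im (c * f w))); last by move=> w _; rewrite ImM.
rewrite !RintegralD //; try exact: (rintN (rintZ _ f2)); try exact: rintZ.
rewrite (eq_Rintegral mu (g := fun w => (- Im c) * Im (f w)) (f := fun w => - (Im c * Im (f w)))); last by move=> w _; rewrite mulNr.
rewrite !RintegralZl //.
by case: c => a b /=; apply/eqP; rewrite eq_complex /=; apply/andP; split; apply/eqP; ring.
Qed.

Lemma cint0 : cint (fun _ => 0) = 0.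
Proof.
have h := cintZ 0 cintegrable0; rewrite [RHS]mul0r in h.
apply: (etrans _ h); by apply: eq_cint => w _; rewrite mul0r.
Qed.

Lemma cint_sum (I : Type) (s : seq I) (F : I -> R * R -> C) :
  (forall i, cintegrable (F i)) -> cint (fun w => \sum_(i <- s) F i w) = \sum_(i <- s) cint (F i).
Proof.
move=> hF; elim: s => [|i s IH].
  rewrite big_nil; apply: (etrans _ cint0); by apply: eq_cint => w _; rewrite big_nil.
rewrite big_cons -IH -cintD //; last exact: cintegrable_sum.
by apply: eq_cint => w _; rewrite big_cons.
Qed.

Lemma cint_conj {f} : cintegrable f -> cint (fun w => (f w)^*%C) = (cint f)^*%C.
Proof.
move=> [f1 f2]; rewrite /cint /=.
rewrite (eq_Rintegral mu (g := fun w => Re (f w))); last by move=> w _; rewrite ReJ.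
rewrite (eq_Rintegral mu (g := fun w => (-1) * Im (f w)) (f := fun w => Im (f w)^*%C)); last by move=> w _; rewrite ImJ mulN1r.
by rewrite RintegralZl // mulN1r.
Qed.

End Cint.


Definition Gm (mu : {finite_measure set (R * R)%type -> \bar R}) (e : int) : C :=
  cint mu (fun w => toC w ^ e).

Definition S (a b : nat) (c F : int -> C) : C :=
  \sum_(k < (a + b).+1) c (k%:Z - a%:Z) * F (k%:Z - a%:Z).

Lemma cond_iff mu a b c p :
  cint_eq0 mu (fun w => leval a b c (toC w) * toC w ^ (- p)) <->
  S a b c (fun e => Gm mu (e - p)) = 0.
Proof.
set f := fun w => leval a b c (toC w) * toC w ^ (- p).
set g := fun w => \sum_(k < (a+b).+1) c (k%:Z - a%:Z) * toC w ^ (k%:Z - a%:Z - p).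
have eqf : {in D, g =1 f}.
  move=> w /set_mem Dw; rewrite /f /g /leval mulr_suml; apply: eq_bigr => k _.
  by rewrite -mulrA -expfzDr // (uni_neq0 (toC_unit w Dw)).
have hZ : forall k : 'I_(a+b).+1, cintegrable mu (fun w => c (k%:Z - a%:Z) * toC w ^ (k%:Z - a%:Z - p)).
  by move=> k; apply: cintegrableZ; apply: cintegrable_pow.
have ig : cintegrable mu g by apply: cintegrable_sum.
have igf : cintegrable mu f := eq_cintegrable mu eqf ig.
rewrite (cint_eq0P mu igf) -(eq_cint mu _ _ eqf) /g cint_sum //.
suff -> : \sum_(k < (a+b).+1) cint mu (fun w => c (k%:Z - a%:Z) * toC w ^ (k%:Z - a%:Z - p)) =
   S a b c (fun e => Gm mu (e - p)) by [].
rewrite /S; apply: eq_bigr => k _; rewrite cintZ //; exact: cintegrable_pow.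
Qed.

Lemma Gm_conj mu e : Gm mu (- e) = (Gm mu e)^*%C.
Proof.
rewrite /Gm -cint_conj; last exact: cintegrable_pow.
by apply: eq_cint => w /set_mem Dw; rewrite conj_pow.
Qed.

End Analysis.


Section Alg.
Variable R : realType.
Local Notation C := (complex R).
Local Notation SS := (@S R).

Lemma eq_S a b c F F' : (forall e, F e = F' e) -> SS a b c F = SS a b c F'.
Proof. by move=> h; rewrite /S; apply: eq_bigr => k _; rewrite h. Qed.

Lemma S_add a b (c1 c2 F : int -> C) :
  SS a b (fun k => c1 k + c2 k) F = SS a b c1 F + SS a b c2 F.
Proof. by rewrite /S -big_split; apply: eq_bigr => k _; rewrite mulrDl. Qed.

Lemma S_scale a b (x : C) (c F : int -> C) :
  SS a b (fun k => x * c k) F = x * SS a b c F.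
Proof. by rewrite /S mulr_sumr; apply: eq_bigr => k _; rewrite mulrA. Qed.

Lemma S_sharp a b (c F : int -> C) :
  SS b a (lsharp c) F = (SS a b c (fun e => (F (- e))^*%C))^*%C.
Proof.
rewrite /S rmorph_sum /= addnC (reindex_inj rev_ord_inj) /=.
apply: eq_bigr => i _; rewrite /lsharp rmorphM /= conjcK.
have hi := ltn_ord i.
have -> : ((a + b - i)%N%:Z - b%:Z) = - (i%:Z - a%:Z) by lia.
by rewrite opprK.
Qed.

Lemma S_shift a b (c F : int -> C) : c (- a%:Z - 1) = 0 -> c b%:Z = 0 ->
  SS a b (fun k => c (k - 1)) F = SS a b c (fun e => F (e + 1)).
Proof.
move=> c0 cb; rewrite /S big_ord_recl big_ord_recr /=.
have -> : c (0%:Z - a%:Z - 1) = 0 by rewrite sub0r.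
have -> : c ((a + b)%N%:Z - a%:Z) = 0 by rewrite -cb; congr c; lia.
rewrite !mul0r add0r addr0; apply: eq_bigr => i _.
rewrite /bump /=.
have -> : ((1 + i)%N%:Z - a%:Z - 1) = i%:Z - a%:Z by lia.
by have -> : ((1 + i)%N%:Z - a%:Z) = i%:Z - a%:Z + 1 by lia.
Qed.

Lemma lsharpK (c : int -> C) : lsharp (lsharp c) = c.
Proof. by apply/funext => p; rewrite /lsharp opprK conjcK. Qed.

Lemma span_sharp a b (c : int -> C) : in_span a b c -> in_span b a (lsharp c).
Proof.
move=> h p hp; rewrite /lsharp h ?conjc0 //.
case: hp => hp; [right|left]; lia.
Qed.

End Alg.

Section Rank.
Variable R : realType.
Local Notation C := (complex R).
Local Notation SS := (@S R).

Lemma rank_lemma a b (E : finType) (F : E -> int -> C) : (#|{: E}| <= a + b)%N ->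
  exists v : int -> C, [/\ exists k, v k != 0, in_span a b v & forall x, SS a b v (F x) = 0].
Proof.
move=> hE.
pose N := (a + b).+1.
pose A : 'M[C]_(N, #|{: E}|) := \matrix_(i < N, l < #|{: E}|) F (enum_val l) (i%:Z - a%:Z).
have hk : (0 < \rank (kermx A))%N.
  by rewrite mxrank_ker; have := rank_leq_col A; rewrite /N; lia.
have kn0 : kermx A != 0 by rewrite -mxrank_eq0 -lt0n.
have [i0 hi0] : exists i0, row i0 (kermx A) != 0.
  case: (pickP (fun i => row i (kermx A) != 0)) => [i0 hi | h]; first by exists i0.
  exfalso; move/eqP: kn0; apply; apply/row_matrixP => i.
  by move: (h i) => /negbFE/eqP ->; rewrite row0.
pose u := row i0 (kermx A).
have uA : u *m A = 0 by rewrite /u -row_mul mulmx_ker row0.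
have [k0 hk0] : exists k, u 0 k != 0.
  case: (pickP (fun k => u 0 k != 0)) => [k hk' | h]; first by exists k.
  exfalso; move/eqP: hi0; apply; apply/rowP => k; rewrite [RHS]mxE.
  by move: (h k) => /negbFE/eqP.
pose v := fun p : int => match (p + a%:Z) with
  | Posz t => if (t < N)%N then u 0 (inord t) else 0 | Negz _ => 0 end.
have vE : forall i : 'I_N, v (i%:Z - a%:Z) = u 0 i.
  by move=> i; rewrite /v subrK /= ltn_ord inord_val.
exists v; split.
- by exists (k0%:Z - a%:Z); rewrite vE.
- move=> p hp; rewrite /v; case E0: (p + a%:Z) => [t|t] //.
  case: ifP => // ht; exfalso; rewrite /N in ht; case: hp; lia.
- move=> x; have := congr1 (fun M : 'M[C]_(1, #|{: E}|) => M 0 (enum_rank x)) uA.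
  rewrite !mxE => <-; rewrite /S; apply: eq_bigr => i _.
  by rewrite vE !mxE enum_rankK.
Qed.

End Rank.

Section Sys.
Variable R : realType.
Local Notation C := (complex R).
Local Notation SS := (@S R).
Variable r : nat.
Variable G : 'I_r -> int -> C.
Hypothesis Gc : forall j e, G j (- e) = (G j e)^*%C.

Definition Hom1 (n m : 'I_r -> nat) (c : int -> C) :=
  forall j (p : int), - (m j)%:Z <= p <= (n j)%:Z - 1 ->
    SS (msize m) (msize n) c (fun e => G j (e - p)) = 0.
Definition Hom2 (n m : 'I_r -> nat) (c : int -> C) :=
  forall j (p : int), - (m j)%:Z + 1 <= p <= (n j)%:Z ->
    SS (msize m) (msize n) c (fun e => G j (e - p)) = 0.
Definition PhiA n m c :=
  [/\ in_span (msize m) (msize n) c, c (msize n)%:Z = 1 & Hom1 n m c].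
Definition PhistarA n m c :=
  [/\ in_span (msize m) (msize n) c, c (- (msize m)%:Z) = 1 & Hom2 n m c].


Lemma hom12 n m c : Hom1 n m c -> Hom2 m n (lsharp c).
Proof.
move=> h j p hp; rewrite S_sharp.
rewrite (@eq_S R _ _ _ _ (fun e => G j (e - (- p)))).
  by rewrite h ?conjc0 //; lia.
by move=> e; rewrite -opprD Gc conjcK opprK.
Qed.

Lemma hom21 n m c : Hom2 m n c -> Hom1 n m (lsharp c).
Proof.
move=> h j p hp; rewrite S_sharp.
rewrite (@eq_S R _ _ _ _ (fun e => G j (e - (- p)))).
  by rewrite h ?conjc0 //; lia.
by move=> e; rewrite -opprD Gc conjcK opprK.
Qed.

Lemma Hom1_add n m c1 c2 : Hom1 n m c1 -> Hom1 n m c2 -> Hom1 n m (fun k => c1 k + c2 k).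
Proof. by move=> h1 h2 j p hp; rewrite S_add h1 ?h2 ?addr0. Qed.

Lemma Hom1_scale n m x c : Hom1 n m c -> Hom1 n m (fun k => x * c k).
Proof. by move=> h j p hp; rewrite S_scale h ?mulr0. Qed.

Lemma span_add a b (c1 c2 : int -> C) : in_span a b c1 -> in_span a b c2 ->
  in_span a b (fun k => c1 k + c2 k).
Proof. by move=> h1 h2 p hp; rewrite h1 ?h2 ?addr0. Qed.

Lemma span_scale a b x (c : int -> C) : in_span a b c -> in_span a b (fun k => x * c k).
Proof. by move=> h p hp; rewrite h ?mulr0. Qed.

Lemma kerK n m : (exists! c, PhiA n m c) ->
  forall e, in_span (msize n) (msize m) e -> e (msize m)%:Z = 0 -> Hom1 m n e ->
  forall p, e p = 0.
Proof.
case=> c0 [[s0 t0 h0] u0] e se em he.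
pose e2 := fun k => e (k - 1).
have se2 : in_span (msize n) (msize m) e2.
  move=> p hp; rewrite /e2; case: (eqVneq (p - 1) (msize m)%:Z) => [->|ne] //.
  by apply: se; case: hp => hp; [left|right]; lia.
have eN : e (- (msize n)%:Z - 1) = 0 by apply: se; left; lia.
have e2n : e2 (- (msize n)%:Z) = 0 by rewrite /e2.
have h2 : Hom2 m n e2.
  move=> j p hp; rewrite /e2 S_shift //.
  rewrite (@eq_S R _ _ _ _ (fun x => G j (x - (p - 1)))).
    by apply: he; lia.
  by move=> x; congr (G j); ring.
pose d := lsharp e2.
have hd : Hom1 n m d := hom21 _ _ _ h2.
have sd : in_span (msize m) (msize n) d := @span_sharp R _ _ _ se2.
have dn : d (msize n)%:Z = 0 by rewrite /d /lsharp e2n conjc0.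
have : PhiA n m (fun k => c0 k + d k).
  split; [exact: span_add | by rewrite t0 dn addr0 | exact: Hom1_add].
move/u0 => E p.
have dz : forall k, d k = 0.
  by move=> k; have := congr1 (fun f => f k) E => /= /eqP; rewrite addrC -subr_eq subrr eq_sym => /eqP.
have -> : e p = e2 (p + 1) by rewrite /e2 addrK.
have -> : e2 = lsharp d by rewrite /d lsharpK.
by rewrite /lsharp dz conjc0.
Qed.

Lemma card_E (n m : 'I_r -> nat) :
  #|{: {j : 'I_r & 'I_(n j + m j)}}| = (msize n + msize m)%N.
Proof.
rewrite card_tagged sumnE big_map big_enum /= /msize -big_split /=.
by apply: eq_bigr => j _; rewrite card_ord.
Qed.

Lemma exists_Phi n m : (exists! c, PhiA n m c) -> exists! c, PhiA m n c.
Proof.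
move=> hu.
pose E := {j : 'I_r & 'I_(n j + m j)}.
pose F := fun x : E => fun e => G (tag x) (e - ((tagged x)%:Z - (n (tag x))%:Z)).
have [v [[k0 hk0] sv hv]] := @rank_lemma R (msize n) (msize m) _ F (eq_leq (card_E n m)).
have Hv : Hom1 m n v.
  move=> j p hp.
  have ht : (absz (p + (n j)%:Z)%R < n j + m j)%N by lia.
  have := hv (Tagged (fun j => 'I_(n j + m j)) (Ordinal ht)).
  rewrite /F /=.
  have -> : ((absz (p + (n j)%:Z))%:Z - (n j)%:Z) = p by lia.
  by [].
case: (eqVneq (v (msize m)%:Z) 0) => [vm0|vmn].
  by move: hk0; rewrite (kerK _ _ hu _ sv vm0 Hv) eqxx.
pose c1 := fun k => (v (msize m)%:Z)^-1 * v k.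
have P1 : PhiA m n c1.
  split; [exact: span_scale | by rewrite /c1 mulVf | exact: Hom1_scale].
exists c1; split => // c2 [s2 t2 h2].
case: P1 => s1 t1 h1.
pose e := fun k => c1 k + (-1) * c2 k.
have se : in_span (msize n) (msize m) e by apply: span_add => //; exact: span_scale.
have em : e (msize m)%:Z = 0 by rewrite /e t1 t2 mulN1r subrr.
have he : Hom1 m n e by apply: Hom1_add => //; exact: Hom1_scale.
apply/funext => k; have := kerK _ _ hu e se em he k.
by rewrite /e mulN1r => /eqP; rewrite subr_eq0 => /eqP.
Qed.

Lemma algmain n m :
  ((exists! c, PhiA n m c) <-> (exists! c, PhiA m n c)) /\
  ((exists! c, PhiA n m c) -> forall c, PhiA n m c ->
     PhistarA m n (lsharp c) /\ (forall c', PhistarA m n c' -> lsharp c = c')).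
Proof.
split; first by split; apply: exists_Phi.
move=> [c0 [P0 u0]] c [sc tc hc].
have e0 : c0 = c by apply: u0.
split.
  split; [exact: span_sharp | by rewrite /lsharp opprK tc conjc1 | exact: hom12].
move=> c' [s' t' h'].
have P' : PhiA n m (lsharp c').
  split; [exact: span_sharp | by rewrite /lsharp t' conjc1 | exact: hom21].
have := u0 _ P'; rewrite e0 => ->.
by rewrite lsharpK.
Qed.

End Sys.


Theorem proposition2p9 (R : realType) (r : nat)
    (mu : 'I_r -> {finite_measure set (R * R)%type -> \bar R})
    (n m : 'I_r -> nat) :
  (forall j, on_unit_circle (mu j)) ->
  (forall j, ~ finite_set (msupport (mu j))) ->
  (normal mu n m <-> normal mu m n) /\
  (normal mu n m ->
     forall c : int -> complex R, is_Phi mu n m c ->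
       is_Phistar mu m n (lsharp c) /\
       (forall c' : int -> complex R, is_Phistar mu m n c' -> lsharp c = c')).
Proof.
move=> _ _.
pose G := fun j => @Gm R (mu j).
have Gc : forall j e, G j (- e) = (G j e)^*%C by move=> j e; exact: (@Gm_conj R).
have ePhi : forall n' m' c, is_Phi mu n' m' c <-> @PhiA R r G n' m' c.
  move=> n' m' c; split => -[s t h]; split => // j p hp.
    by have := h j p hp => /cond_iff.
  by apply/cond_iff; exact: h.
have ePhis : forall n' m' c, is_Phistar mu n' m' c <-> @PhistarA R r G n' m' c.
  move=> n' m' c; split => -[s t h]; split => // j p hp.
    by have := h j p hp => /cond_iff.
  by apply/cond_iff; exact: h.
have eN : forall n' m', normal mu n' m' <-> exists! c, @PhiA R r G n' m' c.
  move=> n' m'; split => -[c [P u]]; exists c; split.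
  - by apply/ePhi.
  - by move=> c' /ePhi; exact: u.
  - by apply/ePhi.
  - by move=> c' /ePhi; exact: u.
have [A B] := @algmain R r G Gc n m.
split.
  by split => h; apply/eN; apply/A; apply/eN.
move=> hn c hc.
have [h1 h2] := B (proj1 (eN n m) hn) c (proj1 (ePhi n m c) hc).
split; first by apply/ePhis.
by move=> c' hc'; apply: h2; apply/ePhis.
Qed.
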